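(* A countable locally finite group $G$ is finite if and only if $\operatorname{asdim}_{AN}(G,d_G)=0$ for every proper left invariant metric $d_G$ on $G$.
   Context: A group is locally finite if every finitely generated subgroup is finite. A metric $d_G$ on $G$ is proper left invariant if $d_G(gh,gk)=d_G(h,k)$ for all $g,h,k$ and every ball is finite. $\operatorname{asdim}_{AN}(X)=0$ means there are constants $C>0$, $k\in\mathbb{R}$ such that for every $s>0$ each $s$-scale connected component of $X$ (class of the relation ''joined by a finite chain $x_0,\dots,x_m$ with $d(x_i,x_{i+1})<s$'') has diameter at most $Cs+k$. *)

(* Defs.v *)
From Stdlib Require Import Reals List.
Open Scope R_scope.

Set Implicit Arguments.

Definition is_group (G : Type) (mul : G -> G -> G) (inv : G -> G) (e : G) : Prop :=
  (forall x y z, mul x (mul y z) = mul (mul x y) z) /\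
  (forall x, mul e x = x) /\ (forall x, mul x e = x) /\
  (forall x, mul (inv x) x = e) /\ (forall x, mul x (inv x) = e).

Definition finite_set (G : Type) (P : G -> Prop) : Prop :=
  exists l : list G, forall x, P x -> In x l.

Definition finite_type (G : Type) : Prop := exists l : list G, forall x : G, In x l.

Definition countable_type (G : Type) : Prop :=
  exists f : G -> nat, forall x y, f x = f y -> x = y.

Inductive gen_subgroup (G : Type) (mul : G -> G -> G) (inv : G -> G) (e : G)
    (gens : list G) : G -> Prop :=
  | gen_unit : gen_subgroup mul inv e gens e
  | gen_base : forall x, In x gens -> gen_subgroup mul inv e gens x
  | gen_mul : forall x y, gen_subgroup mul inv e gens x ->
      gen_subgroup mul inv e gens y -> gen_subgroup mul inv e gens (mul x y)
  | gen_inv : forall x, gen_subgroup mul inv e gens x ->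
      gen_subgroup mul inv e gens (inv x).

Definition locally_finite (G : Type) (mul : G -> G -> G) (inv : G -> G) (e : G) : Prop :=
  forall gens : list G, finite_set (gen_subgroup mul inv e gens).

Definition is_metric (G : Type) (d : G -> G -> R) : Prop :=
  (forall x y, 0 <= d x y) /\
  (forall x y, d x y = 0 <-> x = y) /\
  (forall x y, d x y = d y x) /\
  (forall x y z, d x z <= d x y + d y z).

Definition proper_left_invariant_metric (G : Type) (mul : G -> G -> G)
    (d : G -> G -> R) : Prop :=
  is_metric d /\
  (forall g h k, d (mul g h) (mul g k) = d h k) /\
  (forall x r, finite_set (fun y => d x y <= r)).

(* x and y lie in the same s-scale connected component: joined by a finite
   chain x = x_0, ..., x_m = y with d(x_i, x_{i+1}) < s. *)
Inductive scale_chain (G : Type) (d : G -> G -> R) (s : R) : G -> G -> Prop :=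
  | chain_refl : forall x, scale_chain d s x x
  | chain_step : forall x y z, scale_chain d s x y -> d y z < s ->
      scale_chain d s x z.

(* asdim_AN(X) = 0: there are C > 0 and k such that for every s > 0 each
   s-scale connected component has diameter at most C s + k
   (diameter <= bound  iff  all pairwise distances in it are <= bound). *)
Definition asdimAN_zero (G : Type) (d : G -> G -> R) : Prop :=
  exists C k : R, 0 < C /\
    forall s, 0 < s -> forall x y, scale_chain d s x y -> d x y <= C * s + k.

(* Main.v *)
Require Import Defs.
From Stdlib Require Import Reals List.
From Stdlib Require Import Lia Lra Classical ClassicalEpsilon.

Lemma list_bound (A : Type) (F : A -> R) (l : list A) :
  exists K, forall x, In x l -> F x <= K.
Proof.
  induction l as [|a l IH].
  - exists 0. intros x [].
  - destruct IH as [K HK]. exists (Rmax (F a) K). intros x [<-|Hx].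
    + apply Rmax_l.
    + eapply Rle_trans; [apply HK; exact Hx| apply Rmax_r].
Qed.

Local Open Scope nat_scope.
Lemma arith_base : forall n, (4*(n+14)^3 < 2^(n+14))%nat.
Proof.
  induction n.
  - vm_compute. lia.
  - replace (S n + 14) with (S (n+14)) by lia. rewrite (Nat.pow_succ_r' 2 (n+14)).
    assert (Hc : forall x, 14 <= x -> (S x)^3 <= 2*x^3).
    { intros x Hx. replace ((S x)^3) with ((x+1)*(x+1)*(x+1)) by (simpl; ring).
      replace (x^3) with (x*x*x) by (simpl; ring). assert (x*x*x >= 14*(x*x)) by (rewrite (Nat.mul_comm (x*x) x); apply Nat.mul_le_mono_r; lia).
      assert (x*x >= 14*x) by nia.
      replace ((x+1)*(x+1)*(x+1)) with (x*x*x + 3*(x*x) + 3*x + 1) by ring. lia. }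
    pose proof (Hc (n+14) ltac:(lia)). lia.
Qed.

Lemma arith_final (M : nat) : (1 <= M)%nat ->
  let j := (M*M + 20)%nat in ((M*(j+3)+4)*(M*(j+3)) < 2^j)%nat.
Proof.
  intros HM j.
  assert (Hj : 4*j^3 < 2^j).
  { pose proof (arith_base (j - 14)). replace (j - 14 + 14) with j in H by lia. exact H. }
  assert (HMj : M*M <= j) by lia.
  assert (HM2 : M <= j) by nia.
  assert (A1 : M*(j+3)+4 <= 2*(j*M)) by nia.
  assert (A2 : M*(j+3) <= 2*(j*M)) by nia.
  assert (A3 : (M*(j+3)+4)*(M*(j+3)) <= (2*(j*M))*(2*(j*M))) by (apply Nat.mul_le_mono; lia).
  assert (A4 : (2*(j*M))*(2*(j*M)) <= 4*j^3).
  { replace ((2*(j*M))*(2*(j*M))) with (4*(j*j)*(M*M)) by ring.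
    replace (4*j^3) with (4*(j*j)*j) by (simpl; ring).
    apply Nat.mul_le_mono_l. exact HMj. }
  lia.
Qed.

Local Open Scope nat_scope.
Section Grp.
Variable G : Type.
Variables (mul : G -> G -> G) (inv : G -> G) (e : G).
Hypothesis Hg : is_group mul inv e.

Lemma g_assoc x y z : mul x (mul y z) = mul (mul x y) z.
Proof. apply Hg. Qed.
Lemma g_el x : mul e x = x. Proof. apply Hg. Qed.
Lemma g_er x : mul x e = x. Proof. apply Hg. Qed.
Lemma g_il x : mul (inv x) x = e. Proof. apply Hg. Qed.
Lemma g_ir x : mul x (inv x) = e. Proof. apply Hg. Qed.

Lemma g_inv_uniq z w : mul z w = e -> w = inv z.
Proof.
  intros H. rewrite <- (g_el w), <- (g_il z), <- g_assoc, H, g_er. reflexivity.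
Qed.
Lemma g_inv_e : inv e = e.
Proof. symmetry. apply g_inv_uniq. apply g_el. Qed.
Lemma g_inv_inv x : inv (inv x) = x.
Proof. symmetry. apply g_inv_uniq. apply g_il. Qed.
Lemma g_inv_mul x y : inv (mul x y) = mul (inv y) (inv x).
Proof.
  symmetry. apply g_inv_uniq.
  rewrite <- g_assoc, (g_assoc y), g_ir, g_el, g_ir. reflexivity.
Qed.
Lemma g_cancel a x y : mul a x = mul a y -> x = y.
Proof.
  intros H. rewrite <- (g_el x), <- (g_el y), <- (g_il a), <- !g_assoc, H. reflexivity.
Qed.
Lemma g_left_inv g h k : mul (inv (mul g h)) (mul g k) = mul (inv h) k.
Proof.
  rewrite g_inv_mul, <- g_assoc, (g_assoc (inv g)), g_il, g_el. reflexivity.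
Qed.

Lemma gen_mono (l l' : list G) x : incl l l' ->
  gen_subgroup mul inv e l x -> gen_subgroup mul inv e l' x.
Proof.
  intros Hi H. induction H.
  - apply gen_unit.
  - apply gen_base. auto.
  - apply gen_mul; auto.
  - apply gen_inv; auto.
Qed.

Lemma forward_dir : finite_type G ->
  forall d : G -> G -> R, proper_left_invariant_metric mul d -> asdimAN_zero d.
Proof.
  intros [l Hl] d Hd.
  destruct (list_bound _ (fun p : (G * G)%type => d (fst p) (snd p)) (list_prod l l)) as [K HK].
  exists 1%R, K. split; [lra|]. intros s Hs x y _.
  assert (d x y <= K)%R.
  { apply (HK (x, y)). apply in_prod; apply Hl. }
  lra.
Qed.

Section Back.
Hypothesis Hinf : ~ finite_type G.
Hypothesis Hlf : locally_finite mul inv e.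
Variable f : G -> nat.
Hypothesis Hf : forall x y, f x = f y -> x = y.

Notation H l := (gen_subgroup mul inv e l).

Lemma fresh_ex (l : list G) : exists x, ~ H l x.
Proof.
  apply not_all_ex_not. intros Hall. apply Hinf.
  destruct (Hlf l) as [l' Hl']. exists l'. intros x. apply Hl'. apply Hall.
Qed.

Definition fresh (l : list G) : G := proj1_sig (constructive_indefinite_description _ (fresh_ex l)).
Lemma fresh_spec l : ~ H l (fresh l).
Proof. unfold fresh. destruct constructive_indefinite_description; auto. Qed.

Lemma c_ex (n : nat) : exists x, f x = n \/ ((forall y, f y <> n) /\ x = e).
Proof.
  destruct (classic (exists y, f y = n)) as [[y Hy]|Hn].
  - exists y. auto.
  - exists e. right. split; auto. intros y Hy. apply Hn. eauto.
Qed.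
Definition cc (n : nat) : G := proj1_sig (constructive_indefinite_description _ (c_ex n)).
Lemma cc_spec x : cc (f x) = x.
Proof.
  unfold cc. destruct constructive_indefinite_description as [y Hy0]; simpl.
  destruct Hy0 as [Hy|[Hy _]].
  - apply Hf. exact Hy.
  - exfalso. apply (Hy x). reflexivity.
Qed.

Fixpoint add_fresh (n : nat) (l : list G) : list G :=
  match n with 0 => l | S n' => add_fresh n' (l ++ fresh l :: nil) end.

Fixpoint Lst (j : nat) : list G :=
  add_fresh (2^j) ((match j with 0 => nil | S j' => Lst j' end) ++ cc j :: nil).

Lemma add_fresh_incl n l : incl l (add_fresh n l).
Proof.
  revert l. induction n; simpl; intros l.
  - apply incl_refl.
  - eapply incl_tran; [|apply IHn]. apply incl_appl, incl_refl.
Qed.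
Lemma add_fresh_len n l : length (add_fresh n l) = length l + n.
Proof.
  revert l. induction n; simpl; intros l.
  - lia.
  - rewrite IHn, length_app. simpl. lia.
Qed.

Lemma Lst_len j : length (Lst j) <= 2^(j+2).
Proof.
  induction j.
  - simpl. lia.
  - simpl Lst. rewrite add_fresh_len, length_app. simpl length.
    replace (S j + 2) with (S (j+2)) by lia. rewrite (Nat.pow_succ_r' 2 (j+2)).
    assert (2^(j+2) = 4*2^j) by (rewrite Nat.pow_add_r; simpl; lia).
    assert (1 <= 2^j) by (apply (Nat.pow_le_mono_r 2 0 j); lia).
    lia.
Qed.

Lemma Lst_step j : incl (Lst j) (Lst (S j)).
Proof.
  simpl. eapply incl_tran; [|apply add_fresh_incl]. apply incl_appl, incl_refl.
Qed.
Lemma Lst_mono i j : i <= j -> incl (Lst i) (Lst j).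
Proof.
  induction 1. apply incl_refl. eapply incl_tran; [eassumption|apply Lst_step].
Qed.
Lemma cc_in j : In (cc j) (Lst j).
Proof.
  destruct j; cbn [Lst]; apply add_fresh_incl; apply in_or_app; right; left; reflexivity.
Qed.

Lemma add_fresh_count m : forall l s, NoDup s -> (forall x, In x s -> H l x) ->
  exists s', NoDup s' /\ (forall x, In x s' -> H (add_fresh m l) x) /\
    length s' = length s * 2^m.
Proof.
  induction m; intros l s Hs Hin.
  - exists s. simpl. split; auto. split; auto. lia.
  - set (a := fresh l).
    assert (Hincl : incl l (l ++ a :: nil)) by (apply incl_appl, incl_refl).
    destruct (IHm (l ++ a :: nil) (s ++ map (mul a) s)) as [s' [H1 [H2 H3]]].
    + apply NoDup_app; auto.
      * apply NoDup_map_NoDup_ForallPairs; auto. intros x y _ _. apply g_cancel.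
      * intros x Hx Hx2. apply in_map_iff in Hx2. destruct Hx2 as [y [Hy Hy2]].
        apply (fresh_spec l). fold a.
        assert (a = mul x (inv y)).
        { rewrite <- Hy, <- g_assoc, g_ir, g_er. reflexivity. }
        rewrite H. apply gen_mul; auto. apply gen_inv; auto.
    + intros x Hx. apply in_app_or in Hx. destruct Hx as [Hx|Hx].
      * eapply gen_mono; eauto.
      * apply in_map_iff in Hx. destruct Hx as [y [<- Hy]].
        apply gen_mul. apply gen_base. apply in_or_app; right; left; reflexivity.
        eapply gen_mono; eauto.
    + exists s'. split; auto. split; auto. rewrite H3, length_app, length_map. simpl.
      ring.
Qed.

Lemma Lst_big j : exists s, NoDup s /\ (forall x, In x s -> H (Lst j) x) /\
  length s = 2^(2^j).
Proof.
  destruct (add_fresh_count (2^j) ((match j with 0 => nil | S j' => Lst j' end) ++ cc j :: nil)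
     (e :: nil)) as [s [H1 [H2 H3]]].
  - constructor. intros []. constructor.
  - intros x [<-|[]]. apply gen_unit.
  - exists s. split; auto. split.
    + intros x Hx. specialize (H2 x Hx). destruct j; exact H2.
    + rewrite H3. simpl. lia.
Qed.

Definition W (h : G) (w : nat) : Prop :=
  exists i, w = S i /\ (In h (Lst i) \/ In (inv h) (Lst i)).

Inductive reach : nat -> G -> Prop :=
  | r0 : reach 0 e
  | rS : forall L g h w, reach L g -> W h w -> reach (L + w) (mul g h).

Lemma W_inv h w : W h w -> W (inv h) w.
Proof.
  intros [i [Hi Hh]]. exists i. split; auto. rewrite g_inv_inv. tauto.
Qed.

Lemma reach_app L2 h : reach L2 h -> forall L1 g, reach L1 g -> reach (L1 + L2) (mul g h).
Proof.
  induction 1; intros L1 g0 Hg0.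
  - rewrite g_er, Nat.add_0_r. exact Hg0.
  - rewrite g_assoc, Nat.add_assoc. apply rS; auto.
Qed.

Lemma reach_gen h w : W h w -> reach w h.
Proof.
  intros Hw. rewrite <- (g_el h). apply (rS 0 e h w r0 Hw).
Qed.

Lemma reach_inv L g : reach L g -> reach L (inv g).
Proof.
  induction 1.
  - rewrite g_inv_e. constructor.
  - rewrite g_inv_mul. rewrite Nat.add_comm. apply reach_app; auto.
    apply reach_gen. apply W_inv. auto.
Qed.

Lemma reach_zero g : reach 0 g -> g = e.
Proof.
  intros Hr. inversion Hr as [|L g0 h w Hr0 Hw]; auto. destruct Hw as [i [-> _]]. lia.
Qed.

Lemma reach_of_gen j g : H (Lst j) g -> exists L, reach L g.
Proof.
  induction 1.
  - exists 0. constructor.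
  - exists (S j). apply reach_gen. exists j. auto.
  - destruct IHgen_subgroup1 as [L1 H1], IHgen_subgroup2 as [L2 H2].
    exists (L1 + L2). apply reach_app; auto.
  - destruct IHgen_subgroup as [L1 H1]. exists L1. apply reach_inv; auto.
Qed.

Lemma reach_ex g : exists L, reach L g.
Proof.
  apply (reach_of_gen (f g)). apply gen_base. pose proof (cc_in (f g)) as Hc. rewrite cc_spec in Hc. exact Hc.
Qed.

Lemma least_nat (P : nat -> Prop) : (exists n, P n) -> exists n, P n /\ forall m, P m -> n <= m.
Proof.
  intros [n Hn]. apply NNPP. intros Hno.
  assert (Hall : forall k, forall m, m <= k -> ~ P m).
  { induction k; intros m Hm Pm.
    - apply Hno. exists m. split; auto. intros. lia.
    - destruct (Nat.eq_dec m (S k)).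
      + subst. apply Hno. exists (S k). split; auto. intros m' Pm'.
        destruct (Compare_dec.le_lt_dec (S k) m'); auto. exfalso. apply (IHk m'); auto. lia.
      + apply (IHk m); auto. lia. }
  apply (Hall n n); auto.
Qed.

Definition ell (g : G) : nat :=
  proj1_sig (constructive_indefinite_description _ (least_nat (fun L => reach L g) (reach_ex g))).
Lemma ell_reach g : reach (ell g) g.
Proof. unfold ell. destruct constructive_indefinite_description as [L HL]. exact (proj1 HL). Qed.
Lemma ell_min g L : reach L g -> ell g <= L.
Proof. unfold ell. destruct constructive_indefinite_description as [L' HL]. simpl. apply (proj2 HL). Qed.

Lemma ell_inv g : ell (inv g) = ell g.
Proof.
  apply Nat.le_antisymm.
  - apply ell_min, reach_inv, ell_reach.
  - pose proof (reach_inv _ _ (ell_reach (inv g))) as Hr. rewrite g_inv_inv in Hr.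
    apply ell_min; exact Hr.
Qed.

Definition dd (x y : G) : R := INR (ell (mul (inv x) y)).

Lemma reach_in_Lst L g : reach L g -> H (Lst L) g.
Proof.
  induction 1 as [|L g h w Hr IH Hw].
  - apply gen_unit.
  - apply gen_mul.
    + eapply gen_mono; [|eassumption]. apply Lst_mono. lia.
    + destruct Hw as [i [-> [Hh|Hh]]].
      * apply gen_base. eapply Lst_mono; [|eassumption]. lia.
      * rewrite <- (g_inv_inv h). apply gen_inv. apply gen_base.
        eapply Lst_mono; [|eassumption]. lia.
Qed.

Lemma dd_plim : proper_left_invariant_metric mul dd.
Proof.
  unfold dd. split; [|split].
  - split; [|split; [|split]].
    + intros. apply pos_INR.
    + intros x y. split.
      * intros H0. change 0%R with (INR 0) in H0. apply INR_eq in H0.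
        pose proof (ell_reach (mul (inv x) y)) as Hr. rewrite H0 in Hr.
        apply reach_zero in Hr.
        rewrite <- (g_el y), <- (g_ir x), <- g_assoc, Hr, g_er. reflexivity.
      * intros ->. rewrite g_il. change 0%R with (INR 0). f_equal.
        apply Nat.le_0_r. apply ell_min. constructor.
    + intros x y. f_equal. rewrite <- ell_inv, g_inv_mul, g_inv_inv. reflexivity.
    + intros x y z. rewrite <- plus_INR. apply le_INR. apply ell_min.
      replace (mul (inv x) z) with (mul (mul (inv x) y) (mul (inv y) z)).
      * apply reach_app; apply ell_reach.
      * rewrite <- g_assoc, (g_assoc y), g_ir, g_el. reflexivity.
  - intros g h k. rewrite g_left_inv. reflexivity.
  - intros x r. destruct (INR_unbounded r) as [N HN].
    destruct (Hlf (Lst N)) as [lN HlN]. exists (map (mul x) lN).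
    intros y Hy. apply in_map_iff. exists (mul (inv x) y). split.
    + rewrite g_assoc, g_ir, g_el. reflexivity.
    + apply HlN. eapply gen_mono; [apply Lst_mono|apply reach_in_Lst, ell_reach].
      apply INR_le. lra.
Qed.

Lemma chain_trans s x y z : scale_chain dd s x y -> scale_chain dd s y z -> scale_chain dd s x z.
Proof.
  intros H1 H2. induction H2 as [|y0 z0 w0 Hc IH Hd].
  - exact H1.
  - eapply chain_step; [apply IH; exact H1|exact Hd].
Qed.
Lemma chain_transl s g x y : scale_chain dd s x y -> scale_chain dd s (mul g x) (mul g y).
Proof.
  induction 1. constructor. eapply chain_step; eauto. unfold dd in *. rewrite g_left_inv. auto.
Qed.
Lemma chain_sym s x y : scale_chain dd s x y -> scale_chain dd s y x.
Proof.
  induction 1. constructor. eapply chain_trans; [|eassumption].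
  eapply chain_step. constructor. unfold dd in *.
  rewrite <- ell_inv, g_inv_mul, g_inv_inv. auto.
Qed.

Lemma chain_gen j g : H (Lst j) g -> scale_chain dd (INR (j+2)) e g.
Proof.
  induction 1.
  - constructor.
  - eapply chain_step. constructor. unfold dd. rewrite g_inv_e, g_el.
    apply Rle_lt_trans with (INR (S j)).
    + apply le_INR, ell_min, reach_gen. exists j. auto.
    + apply lt_INR. lia.
  - apply chain_trans with x; [assumption|].
    pose proof (chain_transl _ x _ _ IHgen_subgroup2) as Hc. rewrite g_er in Hc. exact Hc.
  - apply chain_sym.
    pose proof (chain_transl _ (inv x) _ _ IHgen_subgroup) as Hc. rewrite g_er, g_il in Hc. exact Hc.
Qed.

Fixpoint words (Lt : list G) (n : nat) : list G :=
  match n with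
  | 0 => e :: nil
  | S n' => words Lt n' ++ flat_map (fun g => map (mul g) Lt) (words Lt n')
  end.

Lemma words_len Lt n : length (words Lt n) = (length Lt + 1)^n.
Proof.
  induction n; simpl; auto.
  rewrite length_app, (flat_map_constant_length (c := length Lt)), IHn.
  - lia.
  - intros. apply length_map.
Qed.

Lemma words_mono Lt n m : n <= m -> incl (words Lt n) (words Lt m).
Proof.
  induction 1. apply incl_refl. eapply incl_tran; [eassumption|]. simpl. apply incl_appl, incl_refl.
Qed.

Lemma reach_words D L g : reach L g -> L <= D ->
  In g (words (Lst D ++ map inv (Lst D)) L).
Proof.
  induction 1 as [|L g h w Hr IHreach Hw]; intros HL.
  - simpl. auto.
  - destruct Hw as [i [-> Hh]]. replace (L + S i) with (S (L + i)) by lia.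
    simpl. apply in_or_app. right. apply in_flat_map. exists g. split.
    + eapply words_mono; [|apply IHreach; lia]. lia.
    + apply in_map. apply in_or_app. destruct Hh as [Hh|Hh].
      * left. eapply Lst_mono; [|eassumption]. lia.
      * right. rewrite <- (g_inv_inv h). apply in_map. eapply Lst_mono; [|eassumption]. lia.
Qed.

Lemma back_false : asdimAN_zero dd -> False.
Proof.
  intros [C [k [HC Hb]]].
  destruct (INR_unbounded (Rmax 1 (Rmax C k))) as [M HM].
  assert (HM1 : (1 <= M)%nat).
  { assert (INR 1 < INR M)%R. { simpl. pose proof (Rmax_l 1 (Rmax C k)). lra. }
    apply INR_lt in H. lia. }
  assert (HCM : (C <= INR M)%R) by (pose proof (Rmax_r 1 (Rmax C k)); pose proof (Rmax_l C k); lra).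
  assert (HkM : (k <= INR M)%R) by (pose proof (Rmax_r 1 (Rmax C k)); pose proof (Rmax_r C k); lra).
  pose proof (arith_final M HM1) as Har. simpl in Har.
  set (j := M*M + 20) in *. set (D := M*(j+3)) in *.
  destruct (Lst_big j) as [s [Hs1 [Hs2 Hs3]]].
  assert (Hell : forall g, H (Lst j) g -> ell g <= D).
  { intros g Hgj. pose proof (chain_gen j g Hgj) as Hch.
    assert (Hpos : (0 < INR (j+2))%R) by (apply lt_0_INR; lia).
    specialize (Hb _ Hpos e g Hch). unfold dd in Hb. rewrite g_inv_e, g_el in Hb.
    apply INR_le. unfold D. rewrite mult_INR, plus_INR.
    assert (C * INR (j+2) <= INR M * INR (j+2))%R by (apply Rmult_le_compat_r; lra).
    rewrite plus_INR in *. simpl INR in *. nra. }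
  assert (Hincl : incl s (words (Lst D ++ map inv (Lst D)) D)).
  { intros g Hgs. eapply words_mono; [apply (Hell g (Hs2 g Hgs))|].
    apply reach_words; [apply ell_reach|]. apply Hell; auto. }
  pose proof (NoDup_incl_length Hs1 Hincl) as Hlen.
  rewrite words_len, length_app, length_map, Hs3 in Hlen.
  pose proof (Lst_len D) as HLD.
  assert (Hb2 : length (Lst D) + length (Lst D) + 1 <= 2^(D+4)).
  { replace (D+4) with (S (S (D+2))) by lia. rewrite !Nat.pow_succ_r'.
    assert (1 <= 2^(D+2)) by (apply Nat.pow_le_mono_r with (a:=2) (b:=0) (c:=D+2); lia). lia. }
  assert (Hlen2 : 2^(2^j) <= 2^((D+4)*D)).
  { rewrite Nat.pow_mul_r. eapply Nat.le_trans; [exact Hlen|]. apply Nat.pow_le_mono_l. exact Hb2. }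
  apply Nat.pow_le_mono_r_iff in Hlen2; [|lia].
  unfold D in Hlen2. lia.
Qed.

End Back.

Lemma backward_dir : countable_type G -> locally_finite mul inv e ->
  (forall d : G -> G -> R, proper_left_invariant_metric mul d -> asdimAN_zero d) ->
  finite_type G.
Proof.
  intros [f Hf] Hlf Hall. apply NNPP. intros Hinf.
  apply (back_false Hinf Hlf f Hf). apply Hall. apply dd_plim.
Qed.

End Grp.

Theorem mainTheorem12 (G : Type) (mul : G -> G -> G) (inv : G -> G) (e : G) :
  is_group mul inv e ->
  countable_type G ->
  locally_finite mul inv e ->
  (finite_type G <->
   forall d : G -> G -> R, proper_left_invariant_metric mul d -> asdimAN_zero d).
Proof.
  intros Hg Hc Hlf. split.
  - intros Hfin. exact (forward_dir G mul Hfin).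
  - apply (backward_dir G mul inv e Hg); auto.
Qed.
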